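(* Let $n\ge 1$ and let $S=\{w_1,\dots,w_s\}\subset\mathbb{C}^n$ be a unitary 2-design. Then \[ \mathrm{MM}_n = \mathbf{1}\otimes\mathbf{1}\otimes\mathbf{1} + \frac{n^3}{s^3}\sum_{\substack{i,j,k\in\{1,\dots,s\}\\ \text{pairwise distinct}}} |w_i\rangle\langle w_j - w_i| \otimes |w_j\rangle\langle w_k - w_j| \otimes |w_k\rangle\langle w_i - w_k| . \]
   Context: For $u, v \in \mathbb{C}^n$, $|u\rangle\langle v|$ denotes the $n\times n$ matrix whose $(i,j)$ entry is $u_i \overline{v_j}$. Let $e_1,\dots,e_n$ be the standard basis of $\mathbb{C}^n$ and $E_{ab} = |e_a\rangle\langle e_b|$. The matrix multiplication tensor is $\mathrm{MM}_n = \sum_{a,b,c=1}^n E_{ab}\otimes E_{bc}\otimes E_{ca} \in \mathbb{C}^{n\times n}\otimes\mathbb{C}^{n\times n}\otimes\mathbb{C}^{n\times n}$; $\mathbf{1}$ is the $n\times n$ identity matrix. A finite set $S = \{w_1,\dots,w_s\} \subset \mathbb{C}^n$ is a unitary 2-design if $\sum_{i=1}^s w_i = 0$ and $\frac{1}{s}\sum_{i=1}^s |w_i\rangle\langle w_i| = \frac{1}{n}\mathbf{1}$. *)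

(* Defs.v *)
(* The field C^n is modelled by an arbitrary
   numClosedFieldType C (algebraically closed field with complex conjugation). *)
From HB Require Import structures.
From mathcomp Require Import all_boot all_order all_algebra.
Set Implicit Arguments. Unset Strict Implicit. Unset Printing Implicit Defensive.
Import Order.TTheory GRing.Theory Num.Theory.
Local Open Scope ring_scope.

Definition ketbra (C : numClosedFieldType) (n : nat) (u v : 'cV[C]_n) : 'M[C]_n :=
  \matrix_(i, j) (u i 0 * (v j 0)^*).

(* Elements of C^{nxn} (x) C^{nxn} (x) C^{nxn} as coefficient arrays indexed by
   ((a,b),(c,d),(e,f)); the elementary tensor A (x) B (x) D has entries
   A a b * B c d * D e f. *)
Definition tensor3 (C : numClosedFieldType) (n : nat) :=
  {ffun ('I_n * 'I_n) * ('I_n * 'I_n) * ('I_n * 'I_n) -> C}.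

Definition tens3 (C : numClosedFieldType) (n : nat) (A B D : 'M[C]_n) : tensor3 C n :=
  [ffun p => A p.1.1.1 p.1.1.2 * B p.1.2.1 p.1.2.2 * D p.2.1 p.2.2].

Definition MM (C : numClosedFieldType) (n : nat) : tensor3 C n :=
  \sum_(a < n) \sum_(b < n) \sum_(c < n)
     tens3 (delta_mx a b) (delta_mx b c) (delta_mx c a).

Definition unitary_2design (C : numClosedFieldType) (n s : nat) (w : 'I_s -> 'cV[C]_n) : Prop :=
  injective w /\
  \sum_(i < s) w i = 0 /\
  (s%:R)^-1 *: (\sum_(i < s) ketbra (w i) (w i)) = (n%:R)^-1 *: (1%:M : 'M[C]_n).

Definition tscale (C : numClosedFieldType) (n : nat) (c : C) (T : tensor3 C n) : tensor3 C n :=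
  [ffun p => c * T p].

(* Main.v *)
Require Import Defs.
From HB Require Import structures.
From mathcomp Require Import all_boot all_order all_algebra.
From mathcomp Require Import ring.
Import Order.TTheory GRing.Theory Num.Theory.
Local Open Scope ring_scope.

Section Key.
Variable R : comRingType.
Variable s : nat.

Definition sum3 (F : 'I_s -> 'I_s -> 'I_s -> R) :=
  \sum_(i < s) \sum_(j < s) \sum_(k < s) F i j k.

Lemma sum3D F G : sum3 (fun i j k => F i j k + G i j k) = sum3 F + sum3 G.
Proof.
rewrite /sum3 -big_split; apply eq_bigr => i _.
rewrite -big_split; apply eq_bigr => j _; exact: big_split.
Qed.

Lemma sum3N F : sum3 (fun i j k => - F i j k) = - sum3 F.
Proof.
rewrite /sum3 -sumrN; apply eq_bigr => i _.
rewrite -sumrN; apply eq_bigr => j _; exact: sumrN.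
Qed.

Lemma sum3M F G H : sum3 (fun i j k => F i * G j * H k) =
  (\sum_i F i) * (\sum_j G j) * (\sum_k H k).
Proof.
rewrite /sum3 -mulrA big_distrl /=; apply eq_bigr => i _.
rewrite big_distrl /= big_distrr /=; apply eq_bigr => j _.
rewrite !big_distrr /=; apply eq_bigr => k _; ring.
Qed.

Lemma eq_sum3 F G : (forall i j k, F i j k = G i j k) -> sum3 F = sum3 G.
Proof.
move=> h; apply eq_bigr => i _; apply eq_bigr => j _; apply eq_bigr => k _; exact: h.
Qed.

Lemma key (wa wc we xb xd xf : 'I_s -> R) :
  \sum_i wa i = 0 -> \sum_i wc i = 0 -> \sum_i we i = 0 ->
  \sum_(i < s) \sum_(j < s) \sum_(k < s)
    (wa i * (xb j - xb i) * (wc j * (xd k - xd j)) * (we k * (xf i - xf k)))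
  = (\sum_i (wa i * xf i)) * (\sum_j (wc j * xb j)) * (\sum_k (we k * xd k))
  - (\sum_i (wa i * xb i)) * (\sum_j (wc j * xd j)) * (\sum_k (we k * xf k)).
Proof.
move=> Ha Hc He.
have -> : \sum_(i < s) \sum_(j < s) \sum_(k < s)
    (wa i * (xb j - xb i) * (wc j * (xd k - xd j)) * (we k * (xf i - xf k)))
  = sum3 (fun i j k =>
      (wa i * xf i) * (wc j * xb j) * (we k * xd k)
    + - ((wa i) * (wc j * xb j) * (we k * xd k * xf k))
    + - ((wa i * xf i) * (wc j * xb j * xd j) * (we k))
    + (wa i) * (wc j * xb j * xd j) * (we k * xf k)
    + - ((wa i * xb i * xf i) * (wc j) * (we k * xd k))
    + (wa i * xb i) * (wc j) * (we k * xd k * xf k)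
    + (wa i * xb i * xf i) * (wc j * xd j) * (we k)
    + - ((wa i * xb i) * (wc j * xd j) * (we k * xf k))).
  by apply: eq_sum3 => i j k; ring.
rewrite !sum3D !sum3N !sum3M Ha Hc He; ring.
Qed.
End Key.

Lemma sum_only (R : nmodType) m (F : 'I_m -> R) a :
  (forall x, x != a -> F x = 0) -> \sum_x F x = F a.
Proof. by move=> h; rewrite (bigD1 a) //= big1 ?addr0. Qed.

Lemma ketbra0 (C : numClosedFieldType) n (u : 'cV[C]_n) : ketbra u 0 = 0.
Proof. by apply/matrixP => i j; rewrite !mxE rmorph0 mulr0. Qed.

Lemma tens3_0l (C : numClosedFieldType) n (B D : 'M[C]_n) : tens3 0 B D = 0.
Proof. by apply/ffunP => p; rewrite !ffunE mxE !mul0r. Qed.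
Lemma tens3_0m (C : numClosedFieldType) n (B D : 'M[C]_n) : tens3 B 0 D = 0.
Proof. by apply/ffunP => p; rewrite !ffunE mxE mulr0 mul0r. Qed.
Lemma tens3_0r (C : numClosedFieldType) n (B D : 'M[C]_n) : tens3 B D 0 = 0.
Proof. by apply/ffunP => p; rewrite !ffunE mxE mulr0. Qed.

Theorem mainTheorem2 (C : numClosedFieldType) (n s : nat) (hn : (1 <= n)%N)
  (w : 'I_s -> 'cV[C]_n) (hS : unitary_2design w) :
  MM C n =
    tens3 (1%:M) (1%:M) (1%:M)
    + tscale ((n%:R ^+ 3) / (s%:R ^+ 3) : C)
        (\sum_(i < s) \sum_(j < s | j != i) \sum_(k < s | (k != i) && (k != j))
          tens3 (ketbra (w i) (w j - w i))
                (ketbra (w j) (w k - w j))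
                (ketbra (w k) (w i - w k))).
Proof.
case: hS => _ [H0 H1].
set T := fun i j k => tens3 (ketbra (w i) (w j - w i))
                (ketbra (w j) (w k - w j)) (ketbra (w k) (w i - w k)).
have -> : \sum_(i < s) \sum_(j < s | j != i) \sum_(k < s | (k != i) && (k != j)) T i j k
   = \sum_(i < s) \sum_(j < s) \sum_(k < s) T i j k.
  apply eq_bigr => i _.
  rewrite [RHS](bigID (fun j => j != i)) /= [X in _ + X]big1 ?addr0; last first.
    move=> j /negbNE/eqP ->; rewrite big1 // => k _.
    by rewrite /T subrr ketbra0 tens3_0l.
  apply eq_bigr => j _.
  rewrite [RHS](bigID (fun k => (k != i) && (k != j))) /= [X in _ + X]big1 ?addr0 //.
  move=> k; rewrite negb_and !negbK => /orP[] /eqP ->.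
    by rewrite /T subrr ketbra0 tens3_0r.
  by rewrite /T subrr ketbra0 tens3_0m.
have H0e a : \sum_i w i a 0 = 0.
  by have := congr1 (fun M : 'cV[C]_n => M a 0) H0; rewrite summxE mxE.
have n0 : (n%:R : C) != 0 by rewrite pnatr_eq0 -lt0n.
have s0 : (s%:R : C) != 0.
  apply/negP => /eqP s0.
  have := congr1 (fun M : 'M[C]_n => M (Ordinal hn) (Ordinal hn)) H1.
  rewrite /= !mxE s0 invr0 mul0r eqxx mulr1n.
  by move=> /esym/eqP; rewrite mulr1 invr_eq0 (negbTE n0).
have H1e a f : \sum_i w i a 0 * (w i f 0)^* = s%:R / n%:R * (a == f)%:R.
  have := congr1 (fun M : 'M[C]_n => M a f) H1.
  rewrite /= !mxE summxE.
  rewrite (eq_bigr (fun i => w i a 0 * (w i f 0)^*)); last by move=> i _; rewrite mxE.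
  move=> h; apply: (mulfI (invr_neq0 s0)); rewrite h; field; exact/andP.
apply/ffunP => -[[[a b] [c d]] [e f]].
rewrite /MM !sum_ffunE.
rewrite (@sum_only _ _ _ a); last first.
  move=> x hx; rewrite sum_ffunE big1 // => y _; rewrite sum_ffunE big1 // => z _.
  by rewrite !ffunE /= !mxE (eq_sym a) (negbTE hx) /= !mul0r.
rewrite sum_ffunE (@sum_only _ _ _ b); last first.
  move=> y hy; rewrite sum_ffunE big1 // => z _.
  by rewrite !ffunE /= !mxE (eq_sym b) (negbTE hy) andbF /= !mul0r.
rewrite sum_ffunE (@sum_only _ _ _ d); last first.
  move=> z hz.
  by rewrite !ffunE /= !mxE (eq_sym d) (negbTE hz) andbF /= mulr0 mul0r.
rewrite !ffunE /= !sum_ffunE.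
under eq_bigr do (rewrite sum_ffunE; under eq_bigr do rewrite sum_ffunE).
rewrite /T.
under eq_bigr do (under eq_bigr do (under eq_bigr do rewrite ffunE /= !mxE !rmorphB)).
rewrite (@key _ s (fun i => w i a 0) (fun i => w i c 0) (fun i => w i e 0)
   (fun i => (w i b 0)^*) (fun i => (w i d 0)^*) (fun i => (w i f 0)^*)) //.
rewrite !H1e !mxE !eqxx /= andbT -mulnb natrM (eq_sym f a).
by field; rewrite n0 s0.
Qed.
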